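(* Let $\mathcal{E}\in\mathbb{R}^{N_1\times N_2\times N_3}$ be any tensor with at most $\mathrm{deg}_{max}(\mathcal{E})$ nonzero entries per horizontal/lateral slice and at least $\mathrm{deg}_{min}(\mathcal{E})$ nonzero entries per horizontal/lateral slice. Then $$\mathrm{deg}_{min}(\mathcal{E})\le\mu(\mathcal{E})\le\mathrm{deg}_{max}(\mathcal{E}).$$
   Context: Horizontal slices of $\mathcal{E}$ are $\mathcal{E}(i,:,:)$, $1\le i\le N_1$, and lateral slices are $\mathcal{E}(:,j,:)$, $1\le j\le N_2$. For $\mathcal{A}\in\mathbb{R}^{N_1\times N_2\times N_3}$ with frontal slices $A^{(k)}=\mathcal{A}(:,:,k)$, $\mathrm{bcirc}(\mathcal{A})\in\mathbb{R}^{N_1N_3\times N_2N_3}$ is the block circulant matrix whose $(i,j)$ block is $A^{(((i-j)\bmod N_3)+1)}$, and the tensor spectral norm is $\|\mathcal{A}\|=\|\mathrm{bcirc}(\mathcal{A})\|$ (largest singular value). $\|\mathcal{A}\|_\infty$ is the maximum absolute entry. $\Omega(\mathcal{E})=\{\mathcal{N}\in\mathbb{R}^{N_1\times N_2\times N_3}:\mathrm{support}(\mathcal{N})\subseteq\mathrm{support}(\mathcal{E})\}$, support being the set of indices of nonzero entries, and $\mu(\mathcal{E})=\max_{\mathcal{N}\in\Omega(\mathcal{E}),\|\mathcal{N}\|_\infty\le1}\|\mathcal{N}\|$. *)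

(* Defs.v *)
From HB Require Import structures.
From mathcomp Require Import all_boot all_order all_algebra.
From mathcomp Require Import classical_sets reals.
Set Implicit Arguments. Unset Strict Implicit. Unset Printing Implicit Defensive.
Import Order.TTheory GRing.Theory Num.Theory.
Local Open Scope ring_scope.
Local Open Scope classical_set_scope.

Definition tensor (R : Type) (N1 N2 N3 : nat) := 'I_N1 -> 'I_N2 -> 'I_N3 -> R.

Definition frontal (R : Type) N1 N2 N3 (A : tensor R N1 N2 N3) (k : 'I_N3)
  : 'M[R]_(N1, N2) := \matrix_(i, j) A i j k.

(* 0-based version of the index ((i - j) mod N3) + 1 *)
Definition circ_idx (n : nat) (i j : 'I_n) : 'I_n :=
  Ordinal (ltn_pmod ((i + n) - j)%N (leq_ltn_trans (leq0n i) (ltn_ord i))).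

(* bcirc(A): N3 x N3 block matrix whose (i,j) block is A^(((i-j) mod N3)+1);
   size (N1*N3) x (N2*N3), written as sums of the block sizes. *)
Definition bcirc (R : Type) N1 N2 N3 (A : tensor R N1 N2 N3)
  : 'M[R]_(\sum_(i < N3) N1, \sum_(j < N3) N2) :=
  \mxblock_(i < N3, j < N3) frontal A (circ_idx i j).

Definition vnorm2 (R : realType) n (x : 'cV[R]_n) : R :=
  Num.sqrt (\sum_(i < n) x i 0 ^+ 2).

(* Spectral norm (largest singular value) = operator 2-norm. *)
Definition specnorm (R : realType) m n (M : 'M[R]_(m, n)) : R :=
  sup [set vnorm2 (M *m x) | x in [set x : 'cV[R]_n | vnorm2 x <= 1]].

Definition tnorm (R : realType) N1 N2 N3 (A : tensor R N1 N2 N3) : R :=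
  specnorm (bcirc A).

Definition in_Omega (R : realType) N1 N2 N3 (E N : tensor R N1 N2 N3) : Prop :=
  forall i j k, N i j k != 0 -> E i j k != 0.

Definition inf_norm_le1 (R : realType) N1 N2 N3 (N : tensor R N1 N2 N3) : Prop :=
  forall i j k, `|N i j k| <= 1.

Definition mu (R : realType) N1 N2 N3 (E : tensor R N1 N2 N3) : R :=
  sup [set tnorm N | N in [set N | in_Omega E N /\ inf_norm_le1 N]].

Definition nnz_horiz (R : realType) N1 N2 N3 (E : tensor R N1 N2 N3) (i : 'I_N1) : nat :=
  #|[set jk : 'I_N2 * 'I_N3 | E i jk.1 jk.2 != 0]|.

Definition nnz_lat (R : realType) N1 N2 N3 (E : tensor R N1 N2 N3) (j : 'I_N2) : nat :=
  #|[set ik : 'I_N1 * 'I_N3 | E ik.1 j ik.2 != 0]|.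

(* Main.v *)
Require Import Defs.
From HB Require Import structures.
From mathcomp Require Import all_boot all_order all_algebra.
From mathcomp Require Import classical_sets reals.
From mathcomp Require Import ring lra zify.
Import Order.TTheory GRing.Theory Num.Theory.
Set Implicit Arguments. Unset Strict Implicit.
Local Open Scope ring_scope.

Lemma spec_ub (R : realType) m n (M : 'M[R]_(m,n)) (a : R) : 0 <= a ->
  (forall i, \sum_j `|M i j| <= a) -> (forall j, \sum_i `|M i j| <= a) ->
  forall x : 'cV[R]_n, vnorm2 x <= 1 -> vnorm2 (M *m x) <= a.
Proof.
move=> a0 hr hc x hx.
have Q0 : 0 <= \sum_j x j 0 ^+ 2 by apply: sumr_ge0 => j _; exact: sqr_ge0.
have hQ : \sum_j x j 0 ^+ 2 <= 1.
  move: hx; rewrite /vnorm2 => hx.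
  have := sqr_sqrtr Q0; have := sqrtr_ge0 (\sum_j x j 0 ^+ 2) => h1 h2.
  rewrite -h2; nra.
set Q := \sum_j x j 0 ^+ 2 in Q0 hQ.
have s20 : 0 <= \sum_i (M *m x) i 0 ^+ 2 by apply: sumr_ge0 => j _; exact: sqr_ge0.
have ss := sqr_sqrtr s20.
have s0 := sqrtr_ge0 (\sum_i (M *m x) i 0 ^+ 2).
rewrite /vnorm2.
set s2 := \sum_i (M *m x) i 0 ^+ 2 in s20 ss s0 *.
set s := Num.sqrt s2 in ss s0 *.
have e1 : s2 = \sum_i \sum_j M i j * x j 0 * (M *m x) i 0.
  by rewrite /s2; apply: eq_bigr => i _; rewrite expr2 {1}mxE mulr_suml.
have e2 : 2 * s * s2 <= \sum_i \sum_j `|M i j| * (s ^+ 2 * x j 0 ^+ 2 + (M *m x) i 0 ^+ 2).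
  rewrite e1 mulr_sumr; apply: ler_sum => i _; rewrite mulr_sumr; apply: ler_sum => j _.
  set u := x j 0; set v := (M *m x) i 0; set w := M i j.
  have h1 : 2 * s * `|u| * `|v| <= s ^+ 2 * u ^+ 2 + v ^+ 2.
    have := sqr_ge0 (s * `|u| - `|v|); rewrite -(real_normK (num_real u)) -(real_normK (num_real v)).
    move: (normr_ge0 u) (normr_ge0 v) => ? ?; nra.
  have h2 : w * u * v <= `|w| * `|u| * `|v| by rewrite -!normrM; exact: real_ler_norm (num_real _).
  have := normr_ge0 w; have := normr_ge0 u; have := normr_ge0 v; nra.
have e3 : \sum_i \sum_j `|M i j| * (s ^+ 2 * x j 0 ^+ 2 + (M *m x) i 0 ^+ 2)
   = s ^+ 2 * \sum_j x j 0 ^+ 2 * (\sum_i `|M i j|) + \sum_i (M *m x) i 0 ^+ 2 * \sum_j `|M i j|.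
  under eq_bigr do (under eq_bigr do rewrite mulrDr; rewrite big_split /=).
  rewrite big_split /=; congr (_ + _).
    rewrite exchange_big mulr_sumr; apply: eq_bigr => j _.
    rewrite mulr_sumr mulr_sumr; apply: eq_bigr => i _; ring.
  by apply: eq_bigr => i _; rewrite mulr_sumr; apply: eq_bigr => j _; rewrite mulrC.
have e4 : \sum_j x j 0 ^+ 2 * (\sum_i `|M i j|) <= Q * a.
  rewrite /Q mulr_suml; apply: ler_sum => j _; apply: ler_wpM2l; [exact: sqr_ge0 | exact: hc].
have e5 : \sum_i (M *m x) i 0 ^+ 2 * \sum_j `|M i j| <= s2 * a.
  rewrite /s2 mulr_suml; apply: ler_sum => i _; apply: ler_wpM2l; [exact: sqr_ge0 | exact: hr].
rewrite e3 in e2.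
have s2e : 0 <= s ^+ 2 by exact: sqr_ge0.
have e6 : s ^+ 2 * \sum_j x j 0 ^+ 2 * (\sum_i `|M i j|) <= s ^+ 2 * a.
  apply: (le_trans (ler_wpM2l s2e e4)); apply: ler_wpM2l => //; nra.
rewrite -ss in e5 e2.
have key : s * s ^+ 2 <= a * s ^+ 2 by lra.
have [->|sp] := eqVneq s 0; first by [].
have sp' : 0 < s ^+ 2 by rewrite exprn_gt0 // lt_def sp s0.
by rewrite -(ler_pM2r sp').
Qed.
Lemma spec_lb (R : realType) m n (M : 'M[R]_(m,n)) (d : R) : (0 < m)%N -> (0 < n)%N -> 0 <= d ->
  (forall i, d <= \sum_j M i j) -> (forall j, d <= \sum_i M i j) ->
  exists2 x : 'cV[R]_n, vnorm2 x <= 1 & d <= vnorm2 (M *m x).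
Proof.
move=> m0 n0 d0 hr hc.
have nR : 0 < n%:R :> R by rewrite ltr0n.
have mR : 0 < m%:R :> R by rewrite ltr0n.
pose c : R := (Num.sqrt (n%:R : R))^-1.
have c2 : c ^+ 2 = (n%:R)^-1 by rewrite /c exprVn sqr_sqrtr // ltW.
exists (const_mx c).
  rewrite /vnorm2 (eq_bigr (fun _ => c ^+ 2)) => [|j _]; last by rewrite mxE.
  by rewrite sumr_const card_ord -mulr_natr c2 mulVf ?sqrtr1 // gt_eqF.
have eMx : forall i : 'I_m, (M *m (const_mx c : 'cV_n)) i 0 = c * \sum_j M i j.
  by move=> i; rewrite !mxE mulr_sumr; apply: eq_bigr => j _; rewrite !mxE mulrC.
set T := \sum_i (\sum_j M i j) ^+ 2.
set S := \sum_i \sum_j M i j.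
have T0 : 0 <= T by apply: sumr_ge0 => i _; exact: sqr_ge0.
have eN : \sum_i (M *m (const_mx c : 'cV_n)) i 0 ^+ 2 = (n%:R)^-1 * T.
  rewrite /T mulr_sumr; apply: eq_bigr => i _; by rewrite eMx exprMn c2.
have Sm : m%:R * d <= S.
  rewrite /S mulr_natl -[X in d *+ X](card_ord m) -sumr_const; exact: ler_sum.
have Sn : n%:R * d <= S.
  rewrite /S exchange_big /= mulr_natl -[X in d *+ X](card_ord n) -sumr_const; exact: ler_sum.
have CS : m%:R * (m%:R * T - S ^+ 2) >= 0.
  have h : 0 <= \sum_i (m%:R * \sum_j M i j - S) ^+ 2 by apply: sumr_ge0 => i _; exact: sqr_ge0.
  suff <- : \sum_i (m%:R * \sum_j M i j - S) ^+ 2 = m%:R * (m%:R * T - S ^+ 2) by [].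
  rewrite (eq_bigr (fun i => m%:R ^+ 2 * (\sum_j M i j) ^+ 2 - (2 * m%:R * S) * (\sum_j M i j) + S ^+ 2)); last by move=> i _; ring.
  rewrite big_split /= sumrB -!mulr_sumr sumr_const card_ord -/T -/S.
  rewrite -mulr_natr; ring.
have CS' : S ^+ 2 <= m%:R * T by nra.
have key : d ^+ 2 <= (n%:R)^-1 * T.
  rewrite ler_pdivlMl //. 
  have h1 : (m%:R * d) * (n%:R * d) <= S * S.
    by apply: ler_pM => //; apply: mulr_ge0 => //; exact: ltW.
  have : m%:R * (n%:R * d ^+ 2) <= m%:R * T.
    apply: le_trans CS'; suff -> : m%:R * (n%:R * d ^+ 2) = (m%:R * d) * (n%:R * d) by rewrite expr2.
    ring.
  by rewrite ler_pM2l.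
rewrite /vnorm2 eN -(ger0_norm d0) -sqrtr_sqr ler_sqrt //.
by apply: mulr_ge0 => //; rewrite invr_ge0 ltW.
Qed.
Lemma sum_block (R : nmodType) n (p_ : 'I_n -> nat) (F : 'I_(\sum_i p_ i) -> R) :
  \sum_s F s = \sum_i \sum_(j : 'I_(p_ i)) F (tagnat.Rank i j).
Proof.
rewrite (sig_big_dep (J := fun i => ordinal (p_ i)) xpredT (fun i => xpredT) (fun i (j : 'I_(p_ i)) => F (tagnat.Rank i j))) /=.
rewrite (reindex (@tagnat.rank n p_)) /=; last exact: tagnat.rank_bij_on.
by apply: eq_bigr => -[i j] _; rewrite tagnat.rankE.
Qed.

Lemma mxblock_Rank (T : Type) p q (p_ : 'I_p -> nat) (q_ : 'I_q -> nat)
  (B : forall i j, 'M[T]_(p_ i, q_ j)) i j r c :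
  mxblock B (tagnat.Rank i r) (tagnat.Rank j c) = B i j r c.
Proof.
have := congr1 (fun M : 'M[T]_(p_ i, q_ j) => M r c) (mxblockK B i j).
by rewrite /submxblock mxE.
Qed.

Lemma circ_inj_l n (j : 'I_n) : injective (fun i => circ_idx i j).
Proof.
move=> i1 i2 /(congr1 val) /= /eqP h; apply: val_inj => /=.
have hj : (j <= n)%N by exact: ltnW.
rewrite -!addnBA // eqn_modDr !modn_small // in h; exact/eqP.
Qed.

Lemma circ_inj_r n (i : 'I_n) : injective (fun j => circ_idx i j).
Proof.
move=> j1 j2 /(congr1 val) /= /eqP h; apply: val_inj => /=.
have hj1 : (j1 <= n)%N by exact: ltnW.
have hj2 : (j2 <= n)%N by exact: ltnW.
rewrite -!addnBA // eqn_modDl in h.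
move: h; rewrite -(eqn_modDr (j1 + j2)).
have -> : (n - j1 + (j1 + j2) = j2 + n)%N by lia.
have -> : (n - j2 + (j1 + j2) = j1 + n)%N by lia.
by rewrite !modnDr !modn_small // eq_sym => /eqP.
Qed.

Lemma bcirc_row (R : realType) N1 N2 N3 (A : tensor R N1 N2 N3) (f : R -> R)
  (s : 'I_(\sum_(i < N3) N1)) :
  exists r : 'I_N1, \sum_t f (bcirc A s t) = \sum_(c < N2) \sum_(k < N3) f (A r c k).
Proof.
exists (tagnat.sig2 s).
rewrite -[in LHS](tagnat.sig2K s).
move: (tagnat.sig1 s) (tagnat.sig2 s) => i r.
rewrite sum_block /=.
under eq_bigr do under eq_bigr do rewrite /bcirc mxblock_Rank /frontal mxE.
rewrite exchange_big /=; apply: eq_bigr => c _.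
by rewrite [RHS](reindex_inj (@circ_inj_r _ i)).
Qed.

Lemma bcirc_col (R : realType) N1 N2 N3 (A : tensor R N1 N2 N3) (f : R -> R)
  (t : 'I_(\sum_(i < N3) N2)) :
  exists c : 'I_N2, \sum_s f (bcirc A s t) = \sum_(r < N1) \sum_(k < N3) f (A r c k).
Proof.
exists (tagnat.sig2 t).
rewrite -[in LHS](tagnat.sig2K t).
move: (tagnat.sig1 t) (tagnat.sig2 t) => j c.
rewrite sum_block /=.
under eq_bigr do under eq_bigr do rewrite /bcirc mxblock_Rank /frontal mxE.
rewrite exchange_big /=; apply: eq_bigr => r _.
by rewrite [RHS](reindex_inj (@circ_inj_l _ j)).
Qed.

Lemma nnz_h_sum (R : realType) N1 N2 N3 (E : tensor R N1 N2 N3) r :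
  (nnz_horiz E r)%:R = \sum_(c < N2) \sum_(k < N3) ((E r c k != 0)%:R : R).
Proof.
rewrite /nnz_horiz -sum1_card natr_sum big_mkcond /= pair_big /=.
apply: eq_bigr => -[c k] _ /=.
have -> : ((c, k) \in [set jk | E r jk.1 jk.2 != 0]%classic) = (E r c k != 0).
  by apply/idP/idP; rewrite in_setE.
by case: (E r c k != 0).
Qed.

Lemma nnz_l_sum (R : realType) N1 N2 N3 (E : tensor R N1 N2 N3) c :
  (nnz_lat E c)%:R = \sum_(r < N1) \sum_(k < N3) ((E r c k != 0)%:R : R).
Proof.
rewrite /nnz_lat -sum1_card natr_sum big_mkcond /= pair_big /=.
apply: eq_bigr => -[r k] _ /=.
have -> : ((r, k) \in [set ik | E ik.1 c ik.2 != 0]%classic) = (E r c k != 0).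
  by apply/idP/idP; rewrite in_setE.
by case: (E r c k != 0).
Qed.

Lemma entry_le (R : realType) N1 N2 N3 (E N : tensor R N1 N2 N3) :
  in_Omega E N -> inf_norm_le1 N -> forall r c k, `|N r c k| <= ((E r c k != 0)%:R : R).
Proof.
move=> hO hI r c k; have [hE|hE] := eqVneq (E r c k) 0; last exact: hI.
have -> : N r c k = 0.
  by apply/eqP/negPn/negP => hN; move: (hO r c k hN); rewrite hE eqxx.
by rewrite normr0.
Qed.

Lemma vnorm2_0 (R : realType) n : vnorm2 (0 : 'cV[R]_n) <= 1.
Proof. by rewrite /vnorm2 big1 ?sqrtr0 ?ler01 // => j _; rewrite mxE expr0n. Qed.

Lemma inner_ub (R : realType) N1 N2 N3 (E N : tensor R N1 N2 N3) (dmax : nat) :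
  (forall i, nnz_horiz E i <= dmax)%N -> (forall j, nnz_lat E j <= dmax)%N ->
  in_Omega E N -> inf_norm_le1 N ->
  forall x, vnorm2 x <= 1 -> vnorm2 (bcirc N *m x) <= dmax%:R.
Proof.
move=> hh hl hO hI x hx; apply: spec_ub => //.
- move=> s; have [r ->] := bcirc_row N (@Num.norm _ R) s.
  apply: (@le_trans _ _ (nnz_horiz E r)%:R); last by rewrite ler_nat.
  rewrite nnz_h_sum; apply: ler_sum => c _; apply: ler_sum => k _; exact: (entry_le hO hI).
- move=> t; have [c ->] := bcirc_col N (@Num.norm _ R) t.
  apply: (@le_trans _ _ (nnz_lat E c)%:R); last by rewrite ler_nat.
  rewrite nnz_l_sum; apply: ler_sum => r _; apply: ler_sum => k _; exact: (entry_le hO hI).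
Qed.

Lemma tnorm_ub (R : realType) N1 N2 N3 (E N : tensor R N1 N2 N3) (dmax : nat) :
  (forall i, nnz_horiz E i <= dmax)%N -> (forall j, nnz_lat E j <= dmax)%N ->
  in_Omega E N -> inf_norm_le1 N -> tnorm N <= dmax%:R.
Proof.
move=> hh hl hO hI; rewrite /tnorm /specnorm; apply: ge_sup.
  by exists (vnorm2 (bcirc N *m 0)); exists 0 => //; exact: vnorm2_0.
by move=> y [x hx <-]; exact: inner_ub.
Qed.

Unset Implicit Arguments. Set Strict Implicit.
Theorem lemma4 (R : realType) (N1 N2 N3 : nat)
  (hN1 : (0 < N1)%N) (hN2 : (0 < N2)%N) (hN3 : (0 < N3)%N)
  (E : tensor R N1 N2 N3) (deg_min deg_max : nat)
  (hmax_h : forall i : 'I_N1, (nnz_horiz E i <= deg_max)%N)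
  (hmax_l : forall j : 'I_N2, (nnz_lat E j <= deg_max)%N)
  (hmin_h : forall i : 'I_N1, (deg_min <= nnz_horiz E i)%N)
  (hmin_l : forall j : 'I_N2, (deg_min <= nnz_lat E j)%N) :
  deg_min%:R <= mu E /\ mu E <= deg_max%:R.
Proof.
pose N0 : tensor R N1 N2 N3 := fun i j k => ((E i j k != 0)%:R : R).
have O0 : in_Omega E N0 by move=> i j k; rewrite /N0; case: (E i j k != 0) => //; rewrite eqxx.
have I0 : inf_norm_le1 N0 by move=> i j k; rewrite /N0; case: (E i j k != 0); rewrite ?normr1 ?normr0 ?ler01.
have hub : mu E <= deg_max%:R.
  rewrite /mu; apply: ge_sup.
    by exists (tnorm N0); exists N0.
  by move=> y [N [hO hI] <-]; exact: tnorm_ub.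
split => //.
have hm : (0 < \sum_(i < N3) N1)%N by rewrite sum_nat_const card_ord muln_gt0 hN3 hN1.
have hn : (0 < \sum_(i < N3) N2)%N by rewrite sum_nat_const card_ord muln_gt0 hN3 hN2.
have [x hx hd] : exists2 x, vnorm2 x <= 1 & deg_min%:R <= vnorm2 (bcirc N0 *m x).
  apply: spec_lb => //.
  - move=> s; have [r ->] := bcirc_row N0 id s.
    by rewrite -nnz_h_sum ler_nat.
  - move=> t; have [c ->] := bcirc_col N0 id t.
    by rewrite -nnz_l_sum ler_nat.
apply: (le_trans hd); apply: (@le_trans _ _ (tnorm N0)).
  rewrite /tnorm /specnorm; apply: ub_le_sup; last by exists x.
  exists deg_max%:R => y [x' hx' <-]; exact: inner_ub.
rewrite /mu; apply: ub_le_sup; last by exists N0.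
by exists deg_max%:R => y [N [hO hI] <-]; exact: tnorm_ub.
Qed.
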